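(* Let $k\ge 1$ and consider the Kneser graph $K(2k+1,k)$. Let $r_{max}=\binom{2k}{k-1}$, and for real $r>0$ define $$\beta(r)=\binom{2k+1}{k}-\frac{1}{r}\binom{2k}{k-1}^2-r.$$ Then for every real $r^*$ with $0<r^*\le r_{max}$, $$\min\{|B(S)| : S\subseteq V,\ r^*\le |S|\le r_{max}\}\;\ge\;\beta(r^* ).$$
   Context: The Kneser graph $K(n,k)$ has as vertices the $k$-element subsets of $[n]$, with two vertices adjacent if and only if they are disjoint. For a graph $G=(V,E)$ and $S\subseteq V$, the boundary of $S$ is $B(S)=\{a\in V\setminus S:\exists b\in S,\ (a,b)\in E\}$. *)

(* Defs.v *)
From HB Require Import structures.
From mathcomp Require Import all_boot all_order all_algebra.
Set Implicit Arguments. Unset Strict Implicit. Unset Printing Implicit Defensive.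
Import Order.TTheory GRing.Theory Num.Theory.

Definition kneser_V (n k : nat) : {set {set 'I_n}} :=
  [set A : {set 'I_n} | #|A| == k].

Definition kneser_adj (n : nat) (a b : {set 'I_n}) : bool := [disjoint a & b].

Definition kneser_boundary (n k : nat) (S : {set {set 'I_n}}) : {set {set 'I_n}} :=
  [set a in kneser_V n k :\: S | [exists b in S, kneser_adj a b]].

Definition kbeta (R : realFieldType) (k : nat) (r : R) : R :=
  ('C(2 * k + 1, k))%:R - (('C(2 * k, k.-1) ^ 2)%N)%:R / r - r.

(* Main.v *)
Require Import Defs.
From HB Require Import structures.
From mathcomp Require Import all_boot all_order all_algebra.
From mathcomp Require Import zify ring lra.
Import Order.TTheory GRing.Theory Num.Theory.
Set Implicit Arguments. Unset Strict Implicit. Unset Printing Implicit Defensive.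
Local Open Scope ring_scope.

Definition lev (T : finType) (j : nat) : {set {set T}} := [set A : {set T} | #|A| == j].

Lemma cnt_sub (T : finType) (X : {set T}) m : #|X| = m.+1 ->
  #|[set v in lev T m | v \subset X]| = m.+1.
Proof.
move=> hX.
have -> : [set v in lev T m | v \subset X] = [set X :\ a | a in X].
  apply/setP => v; rewrite /lev !inE; apply/andP/imsetP.
  - case=> hv sv.
    have h1 : #|X :\: v| == 1%N.
      by rewrite cardsD (setIidPr sv) hX (eqP hv) subSnn.
    case/cards1P: h1 => a ha.
    have : a \in X :\: v by rewrite ha set11.
    rewrite inE => /andP[av aX].
    exists a => //.
    apply/setP => x; rewrite !inE.
    have hx : (x \in X :\: v) = (x \in [set a]) by rewrite ha.
    move: hx; rewrite !inE => hx.
    case xv: (x \in v).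
      rewrite (subsetP sv x xv) andbT; case: eqP => // exa.
      by rewrite -exa xv in av.
    by move: hx; rewrite xv /= => ->; case: eqP.
  - case=> a aX ->; split; last exact: subD1set.
    by move: (cardsD1 a X); rewrite aX hX add1n => -[<-].
rewrite card_in_imset ?hX // => a b aX bX /setP eq.
move/(_ b): eq; rewrite !inE eqxx bX andbT /=.
by move/negbFE/eqP.
Qed.

Lemma cnt_sup (T : finType) (u : {set T}) m : #|u| = m ->
  #|[set w in lev T m.+1 | u \subset w]| = (#|T| - m)%N.
Proof.
move=> hu.
have -> : [set w in lev T m.+1 | u \subset w] = [set a |: u | a in ~: u].
  apply/setP => w; rewrite /lev !inE; apply/andP/imsetP.
  - case=> hw sw.
    have h1 : #|w :\: u| == 1%N.
      by rewrite cardsD (setIidPr sw) hu (eqP hw) subSnn.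
    case/cards1P: h1 => a ha.
    have : a \in w :\: u by rewrite ha set11.
    rewrite inE => /andP[au aw].
    exists a; first by rewrite inE.
    apply/setP => x; rewrite !inE.
    have hx : (x \in w :\: u) = (x \in [set a]) by rewrite ha.
    move: hx; rewrite !inE => hx.
    case xu: (x \in u); first by rewrite (subsetP sw x xu) orbT.
    by move: hx; rewrite xu /= orbF.
  - case=> a; rewrite inE => au ->; split; last exact: subsetUr.
    by rewrite cardsU1 au hu.
rewrite card_in_imset.
  by rewrite cardsCs setCK hu.
move=> a b; rewrite !inE => au bu /setP eq.
move/(_ a): eq; rewrite !inE eqxx (negbTE au) /= orbF.
by move/esym/eqP.
Qed.

Lemma sup_card1 (T : finType) (X : {set T}) c : (c <= #|X|)%N ->
  #|[set w in lev T c | X \subset w]| = (#|X| == c).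
Proof.
move=> hc; case: eqP => hX.
  have -> : [set w in lev T c | X \subset w] = [set X].
    apply/setP => w; rewrite /lev !inE; apply/andP/eqP.
      case=> /eqP hw sw; apply/esym/eqP; rewrite eqEcard sw hw hX leqnn //.
    by move=> ->; rewrite hX eqxx subxx.
  by rewrite cards1.
apply/eqP; rewrite cards_eq0; apply/eqP/setP => w; rewrite /lev !inE.
apply/andP => -[/eqP hw sw]; apply: hX; apply/eqP; rewrite eqn_leq hc andbT.
by rewrite -hw subset_leq_card.
Qed.

Lemma sub_card1 (T : finType) (X : {set T}) c : (#|X| <= c)%N ->
  #|[set v in lev T c | v \subset X]| = (#|X| == c).
Proof.
move=> hc; case: eqP => hX.
  have -> : [set v in lev T c | v \subset X] = [set X].
    apply/setP => w; rewrite /lev !inE; apply/andP/eqP.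
      case=> /eqP hw sw; apply/eqP; rewrite eqEcard sw hw hX leqnn //.
    by move=> ->; rewrite hX eqxx subxx.
  by rewrite cards1.
apply/eqP; rewrite cards_eq0; apply/eqP/setP => w; rewrite /lev !inE.
apply/andP => -[/eqP hw sw]; apply: hX; apply/eqP; rewrite eqn_leq hc /=.
by rewrite -hw subset_leq_card.
Qed.

Lemma sum1_cond (R : realFieldType) (A : finType) (X : {set A}) (Q : pred A) :
  \sum_(x in X | Q x) (1 : R) = (#|[set x in X | Q x]|)%:R.
Proof.
rewrite -sumr_const; apply: eq_bigl => x; by rewrite inE.
Qed.

Lemma sum_ind (R : realFieldType) (A : finType) (X : {set A}) (Q : pred A) :
  \sum_(x in X) (Q x)%:R = (#|[set x in X | Q x]|)%:R :> R.
Proof.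
rewrite -sum1_cond big_mkcondr /=; apply: eq_bigr => x _; by case: (Q x).
Qed.

Lemma sq_sum (R : realFieldType) (A B : finType) (X : {set A}) (U : {set B})
   (P : B -> A -> bool) (f : B -> R) :
  \sum_(x in X) (\sum_(u in U | P u x) f u) ^+ 2 =
  \sum_(u in U) \sum_(u' in U) f u * f u' * (#|[set x in X | P u x && P u' x]|)%:R.
Proof.
have e1 : forall x, (\sum_(u in U | P u x) f u) ^+ 2 =
   \sum_(u in U) \sum_(u' in U) (f u * f u' * (P u x && P u' x)%:R).
  move=> x; rewrite expr2 big_mkcondr /= big_distrl /=; apply: eq_bigr => u _.
  rewrite big_distrr /=; apply: eq_bigr => u' _.
  by case: (P u x); case: (P u' x); rewrite /= ?mulr1 ?mulr0 ?mul0r.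
rewrite (eq_bigr _ (fun x _ => e1 x)) exchange_big /=.
apply: eq_bigr => u _; rewrite exchange_big /=; apply: eq_bigr => u' _.
by rewrite -sum_ind -mulr_sumr.
Qed.

Lemma adj_sum (R : realFieldType) (A B : finType) (X : {set A}) (U : {set B})
   (P : B -> A -> bool) (f : B -> R) (h : A -> R) :
  \sum_(x in X) h x * (\sum_(u in U | P u x) f u) =
  \sum_(u in U) f u * (\sum_(x in X | P u x) h x).
Proof.
have e1 : forall x, h x * (\sum_(u in U | P u x) f u) =
   \sum_(u in U) (h x * f u * (P u x)%:R).
  move=> x; rewrite big_mkcondr /= big_distrr /=; apply: eq_bigr => u _.
  by case: (P u x); rewrite /= ?mulr1 ?mulr0.
rewrite (eq_bigr _ (fun x _ => e1 x)) exchange_big /=.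
apply: eq_bigr => u _; rewrite big_mkcondr /= big_distrr /=; apply: eq_bigr => x _.
by case: (P u x); rewrite /= ?mulr1 ?mulr0 // mulrC.
Qed.
Lemma sum_prod (R : realFieldType) (A : finType) (X : {set A}) (a b : A -> R) :
  \sum_(i in X) \sum_(j in X) a i * b j = (\sum_(i in X) a i) * (\sum_(j in X) b j).
Proof. rewrite big_distrl /=; apply: eq_bigr => i _; by rewrite big_distrr. Qed.

Lemma cauchy_schwarz (R : realFieldType) (A : finType) (X : {set A}) (x y : A -> R) :
  (\sum_(i in X) x i * y i) ^+ 2 <= (\sum_(i in X) x i ^+ 2) * (\sum_(i in X) y i ^+ 2).
Proof.
have h0 : 0 <= \sum_(i in X) \sum_(j in X) (x i * y j - x j * y i) ^+ 2.
  by apply: sumr_ge0 => i _; apply: sumr_ge0 => j _; apply: sqr_ge0.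
have e2 : forall i j, (x i * y j - x j * y i) ^+ 2 =
     (x i ^+ 2 * y j ^+ 2 + y i ^+ 2 * x j ^+ 2) - (x i * y i) * (x j * y j) * 2.
  by move=> i j; ring.
have e : \sum_(i in X) \sum_(j in X) (x i * y j - x j * y i) ^+ 2 =
   (\sum_(i in X) x i ^+ 2) * (\sum_(i in X) y i ^+ 2) * 2 - (\sum_(i in X) x i * y i) ^+ 2 * 2.
  transitivity (\sum_(i in X) \sum_(j in X) ((x i ^+ 2 * y j ^+ 2 + y i ^+ 2 * x j ^+ 2)
        - (x i * y i) * (x j * y j) * 2)).
    by apply: eq_bigr => i _; apply: eq_bigr => j _; apply: e2.
  under eq_bigr => i _ do rewrite sumrB big_split /=.
  rewrite sumrB big_split /= !sum_prod.
  have -> : \sum_(i in X) \sum_(j in X) x i * y i * (x j * y j) * 2 =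
     (\sum_(i in X) x i * y i) * (\sum_(j in X) x j * y j * 2).
    rewrite -sum_prod; apply: eq_bigr => i _; apply: eq_bigr => j _; ring.
  rewrite -mulr_suml expr2; ring.
rewrite e in h0; rewrite -subr_ge0; move: h0.
rewrite -mulrBl pmulr_lge0 //; lra.
Qed.

Definition up (R : realFieldType) (T : finType) j (f : {set T} -> R) (w : {set T}) :=
  \sum_(u in lev T j | u \subset w) f u.
Definition upn (R : realFieldType) (T : finType) j (f : {set T} -> R) :=
  \sum_(w in lev T j.+1) (up j f w) ^+ 2.
Definition nrm (R : realFieldType) (T : finType) j (f : {set T} -> R) :=
  \sum_(u in lev T j) f u ^+ 2.
Definition dn (R : realFieldType) (T : finType) j (f : {set T} -> R) (v : {set T}) :=
  \sum_(u in lev T j.+1 | v \subset u) f u.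

Lemma pair_cnt (T : finType) (u u' : {set T}) m : #|u| = m.+1 -> #|u'| = m.+1 -> u != u' ->
  #|[set w in lev T m.+2 | (u \subset w) && (u' \subset w)]| =
  #|[set v in lev T m | (v \subset u) && (v \subset u')]|.
Proof.
move=> hu hu' ne.
have -> : [set w in lev T m.+2 | (u \subset w) && (u' \subset w)] =
          [set w in lev T m.+2 | u :|: u' \subset w].
  by apply/setP => w; rewrite !inE subUset.
have -> : [set v in lev T m | (v \subset u) && (v \subset u')] =
          [set v in lev T m | v \subset u :&: u'].
  by apply/setP => w; rewrite !inE subsetI.
have hUI := cardsUI u u'.
have hU : (m.+2 <= #|u :|: u'|)%N.
  have := subset_leq_card (subsetUl u u'); rewrite hu leq_eqVlt => /orP[/eqP e|//].
  exfalso; move/negP: ne; apply.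
  have e1 : u == u :|: u' by rewrite eqEcard subsetUl -e hu leqnn.
  have s1 : u' \subset u by rewrite (eqP e1) subsetUr.
  by rewrite eq_sym eqEcard s1 hu hu' leqnn.
rewrite sup_card1 // sub_card1; last by lia.
congr (nat_of_bool _); apply/eqP/eqP; lia.
Qed.

Lemma L1 (R : realFieldType) (T : finType) j (f : {set T} -> R) : (j.+1 < #|T|)%N ->
  upn j.+1 f = nrm j (dn j f) + (#|T|%:R - 2 * (j.+1)%:R) * nrm j.+1 f.
Proof.
move=> hj; rewrite /upn /up /nrm /dn.
rewrite (sq_sum _ _ (fun u w : {set T} => u \subset w)) (sq_sum _ _ (fun u v : {set T} => v \subset u)).
rewrite mulr_sumr -big_split /=; apply: eq_bigr => u uin.
have hu : #|u| = j.+1 by move: uin; rewrite /lev inE => /eqP.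
rewrite (bigD1 u uin) [X in _ = X + _](bigD1 u uin) /=.
have -> : \sum_(i in lev T j.+1 | i != u)
    f u * f i * (#|[set x in lev T j.+2 | (u \subset x) && (i \subset x)]|)%:R =
  \sum_(i in lev T j.+1 | i != u)
    f u * f i * (#|[set x in lev T j | (x \subset u) && (x \subset i)]|)%:R.
  apply: eq_bigr => u' /andP[u'in ne]; rewrite pair_cnt //.
    by move: u'in; rewrite /lev inE => /eqP.
  by rewrite eq_sym.
have e1 : [set x in lev T j.+2 | (u \subset x) && (u \subset x)] = [set x in lev T j.+2 | u \subset x].
  by apply/setP => x; rewrite !inE andbb.
have e2 : [set x in lev T j | (x \subset u) && (x \subset u)] = [set x in lev T j | x \subset u].
  by apply/setP => x; rewrite !inE andbb.
rewrite e1 e2 cnt_sup // cnt_sub // natrB; last by apply: ltnW.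
set Z := \sum_(i in lev T j.+1 | i != u) _.
rewrite -natr1; ring.
Qed.

Lemma key_ineq (R : realFieldType) (A : finType) (U : {set A}) (x y : A -> R) (c Y : R) :
  0 <= c -> \sum_(u in U) y u ^+ 2 <= c * Y -> Y = \sum_(u in U) x u * y u ->
  Y <= c * \sum_(u in U) x u ^+ 2.
Proof.
move=> c0 hS hY.
have hX : 0 <= \sum_(u in U) x u ^+ 2 by apply: sumr_ge0 => u _; apply: sqr_ge0.
case: (eqVneq c 0) => [c00|cn0].
  move: hS; rewrite c00 mul0r => hS.
  have h0 : \sum_(u in U) y u ^+ 2 = 0.
    by apply/le_anti; rewrite hS; apply: sumr_ge0 => u _; apply: sqr_ge0.
  have hy : forall u, u \in U -> y u = 0.
    move=> u uU; move/psumr_eq0P: h0 => /(_ (fun u _ => sqr_ge0 (y u))) h.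
    by apply/eqP; rewrite -sqrf_eq0; apply/eqP; apply: h.
  rewrite hY mul0r big1 // => u uU; by rewrite hy // mulr0.
have cp : 0 < c by rewrite lt_def cn0 c0.
have pw : forall u, x u * y u <= (c / 2) * x u ^+ 2 + (c^-1 / 2) * y u ^+ 2.
  move=> u; rewrite -subr_ge0.
  have -> : c / 2 * x u ^+ 2 + c^-1 / 2 * y u ^+ 2 - x u * y u =
     (c * x u - y u) ^+ 2 / (2 * c) by field; rewrite cn0.
  by apply: divr_ge0; [apply: sqr_ge0 | apply: mulr_ge0].
have hs : Y <= c / 2 * \sum_(u in U) x u ^+ 2 + c^-1 / 2 * \sum_(u in U) y u ^+ 2.
  by rewrite hY !mulr_sumr -big_split /=; apply: ler_sum => u _; apply: pw.
have hc : c^-1 * \sum_(u in U) y u ^+ 2 <= Y.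
  rewrite -(mulKf cn0 Y); apply: ler_wpM2l => //; by rewrite invr_ge0.
set X := \sum_(u in U) x u ^+ 2 in hX hs *.
set Sy := \sum_(u in U) y u ^+ 2 in hs hc.
have e : c^-1 / 2 * Sy = (c^-1 * Sy) / 2 by ring.
rewrite e in hs.
have e2 : c / 2 * X = (c * X) / 2 by ring.
rewrite e2 in hs.
lra.
Qed.

Lemma L2 (R : realFieldType) (T : finType) j : (j < #|T|)%N ->
  forall f : {set T} -> R, \sum_(u in lev T j) f u = 0 ->
  upn j f <= (j%:R * (#|T|%:R - j%:R - 1)) * nrm j f.
Proof.
elim: j => [|j IH] hj f hf.
  rewrite /upn /up big1 ?mul0r // => w _.
  have -> : \sum_(u in lev T 0 | u \subset w) f u = \sum_(u in lev T 0) f u.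
    apply: eq_bigl => u; case uin: (u \in lev T 0) => //=.
    by move: uin; rewrite /lev inE => /eqP/cards0_eq ->; apply: sub0set.
  by rewrite hf expr2 mulr0.
set g := dn j f.
have hg : \sum_(v in lev T j) g v = 0.
  transitivity (\sum_(v in lev T j) 1 * g v); first by apply: eq_bigr => v _; rewrite mul1r.
  rewrite /g /dn (adj_sum _ _ (fun (u v : {set T}) => v \subset u)).
  rewrite (eq_bigr (fun u => f u * (j.+1)%:R)); last first.
    move=> u uin; rewrite sum1_cond cnt_sub //.
    by move: uin; rewrite /lev inE => /eqP.
  by rewrite -mulr_suml hf mul0r.
have IHg := IH (ltnW hj) g hg.
have hadj : nrm j g = \sum_(u in lev T j.+1) f u * up j g u.
  rewrite /nrm (eq_bigr (fun v => g v * (\sum_(u in lev T j.+1 | v \subset u) f u))); last first.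
    by move=> v _; rewrite expr2.
  by rewrite (adj_sum _ _ (fun (u v : {set T}) => v \subset u)).
have c0 : 0 <= j%:R * (#|T|%:R - j%:R - 1) :> R.
  apply: mulr_ge0; first exact: ler0n.
  have : (j.+1)%:R <= #|T|%:R :> R by rewrite ler_nat; exact: ltnW.
  rewrite -natr1; lra.
have hk := key_ineq c0 IHg hadj.
rewrite L1 //.
have hN : 0 <= nrm j.+1 f by apply: sumr_ge0 => u _; apply: sqr_ge0.
set cj := j%:R * (#|T|%:R - j%:R - 1) in hk c0.
set N := nrm j.+1 f in hk hN *.
set d := (#|T|%:R - 2 * (j.+1)%:R).
have -> : (j.+1)%:R * (#|T|%:R - (j.+1)%:R - 1) = cj + d :> R.
  by rewrite /cj /d -natr1; ring.
change (nrm j g) with (nrm j (dn j f)) in hk; rewrite [(cj + d) * N]mulrDl lerD2r; exact: hk.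
Qed.

Lemma alg1 (R : realFieldType) (K N M s t : R) : 0 < K -> 0 < N -> K * N = (2 * K + 1) * M ->
  0 <= s -> 0 <= t -> s <= N -> t <= N ->
  (s * t * (K + 1)) ^+ 2 <= K ^+ 2 * (s * (N - s)) * (t * (N - t)) -> s * t <= M ^+ 2.
Proof.
move=> Kp Np hKN s0 t0 sN tN H.
have Mp : 0 <= M.
  have : 0 < (2 * K + 1) * M by rewrite -hKN mulr_gt0.
  rewrite pmulr_rgt0; [exact: ltW | lra].
have P0 : 0 <= s * t by apply: mulr_ge0.
case: (eqVneq (s * t) 0) => [->|Pn0]; first exact: sqr_ge0.
have Pp : 0 < s * t by rewrite lt_def Pn0 P0.
set P := s * t in P0 Pn0 Pp H *.
have h1 : P * (K + 1) ^+ 2 <= K ^+ 2 * ((N - s) * (N - t)).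
  rewrite -(ler_pM2l Pp).
  have -> : P * (P * (K + 1) ^+ 2) = (P * (K + 1)) ^+ 2 by ring.
  have -> : P * (K ^+ 2 * ((N - s) * (N - t))) = K ^+ 2 * (s * (N - s)) * (t * (N - t)) by rewrite /P; ring.
  exact: H.
rewrite leNgt; apply/negP => hc.
have h2 : 2 * M < s + t.
  rewrite ltNge; apply/negP => hle.
  have : (s + t) ^+ 2 <= (2 * M) ^+ 2 by rewrite !expr2; apply: ler_pM; lra.
  have : 4 * P <= (s + t) ^+ 2.
    have e : (s + t) ^+ 2 - 4 * P = (s - t) ^+ 2 by rewrite /P; ring.
    by rewrite -subr_ge0 e sqr_ge0.
  nra.
have h4 : 2 * K ^+ 2 * N * M < K ^+ 2 * N * (s + t).
  have KKN : 0 < K ^+ 2 * N by rewrite mulr_gt0 // exprn_gt0.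
  have -> : 2 * K ^+ 2 * N * M = K ^+ 2 * N * (2 * M) by ring.
  by rewrite ltr_pM2l.
have h5 : P * (2 * K + 1) < K ^+ 2 * N ^+ 2 - 2 * K ^+ 2 * N * M.
  have e : K ^+ 2 * ((N - s) * (N - t)) = K ^+ 2 * N ^+ 2 - K ^+ 2 * N * (s + t) + K ^+ 2 * P.
    by rewrite /P; ring.
  rewrite e in h1; nra.
have e6 : K ^+ 2 * N ^+ 2 - 2 * K ^+ 2 * N * M = (2 * K + 1) * M ^+ 2.
  have -> : K ^+ 2 * N ^+ 2 - 2 * K ^+ 2 * N * M = (K * N) * (K * N - 2 * K * M) by ring.
  rewrite hKN; ring.
rewrite e6 in h5.
have : P < M ^+ 2.
  have K21 : 0 < 2 * K + 1 by lra.
  by rewrite -(ltr_pM2r K21) [M ^+ 2 * _]mulrC.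
lra.
Qed.

Lemma alg2 (R : realFieldType) (N M r s t b : R) : 0 < r -> r <= s -> s <= M -> r <= M -> 0 <= t ->
  s * t <= M ^+ 2 -> b = N - s - t -> N - M ^+ 2 / r - r <= b.
Proof.
move=> rp rs sM rM t0 hst ->.
have : s + t <= M ^+ 2 / r + r.
  rewrite -(ler_pM2l rp).
  have -> : r * (M ^+ 2 / r + r) = M ^+ 2 + r ^+ 2 by field; rewrite gt_eqF.
  have hrs : r * s <= M ^+ 2 by rewrite expr2; apply: ler_pM; lra.
  case: (lerP r t) => hrt; nra.
lra.
Qed.

Lemma ind_sum (R : realFieldType) (A : finType) (V B : {set A}) : B \subset V ->
  \sum_(u in V) (u \in B)%:R = (#|B|)%:R :> R.
Proof.
move=> BV; rewrite sum_ind.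
have -> : [set u in V | u \in B] = B.
  apply/setP => u; rewrite inE; case uB: (u \in B); rewrite ?andbT ?andbF //.
  exact: (subsetP BV).
by [].
Qed.

Lemma var_ind (R : realFieldType) (A : finType) (V B : {set A}) (a : R) : B \subset V ->
  \sum_(u in V) ((u \in B)%:R - a) ^+ 2 = (#|B|)%:R - 2 * a * (#|B|)%:R + (#|V|)%:R * a ^+ 2.
Proof.
move=> BV.
rewrite (eq_bigr (fun u => (u \in B)%:R - 2 * a * (u \in B)%:R + a ^+ 2)); last first.
  by move=> u _; case: (u \in B); rewrite /=; ring.
rewrite !big_split /= sumrN -mulr_sumr ind_sum // sumr_const -mulr_natl; ring.
Qed.

Lemma alg0 (R : realFieldType) (s t N K d : R) : 0 < N -> d = K + 1 ->
  (N * (t / N) * (s / N) * d) ^+ 2 <=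
     K ^+ 2 * (s - 2 * (s / N) * s + N * (s / N) ^+ 2) * (t - 2 * (t / N) * t + N * (t / N) ^+ 2) ->
  (s * t * (K + 1)) ^+ 2 <= K ^+ 2 * (s * (N - s)) * (t * (N - t)).
Proof.
move=> Np -> H.
have Nn0 : N != 0 by rewrite gt_eqF.
have e1 : (N * (t / N) * (s / N) * (K + 1)) ^+ 2 = (s * t * (K + 1)) ^+ 2 * (N ^+ 2)^-1.
  by field.
have e2 : K ^+ 2 * (s - 2 * (s / N) * s + N * (s / N) ^+ 2) * (t - 2 * (t / N) * t + N * (t / N) ^+ 2)
   = K ^+ 2 * (s * (N - s)) * (t * (N - t)) * (N ^+ 2)^-1.
  by field.
move: H; rewrite e1 e2 ler_pM2r // invr_gt0 exprn_gt0 //.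
Qed.

Unset Implicit Arguments.
Theorem lemma3p4 (R : realFieldType) (k : nat) (rs : R)
    (S : {set {set 'I_(2 * k + 1)}}) :
  (1 <= k)%N ->
  0 < rs -> rs <= ('C(2 * k, k.-1))%:R ->
  S \subset kneser_V (2 * k + 1) k ->
  rs <= (#|S|)%:R -> (#|S| <= 'C(2 * k, k.-1))%N ->
  kbeta k rs <= (#|kneser_boundary k S|)%:R.
Proof.
move=> k1 rs0 rsM SV rsS SM.
have cT : #|'I_(2 * k + 1)| = (2 * k + 1)%N := card_ord _.
set V := kneser_V (2 * k + 1) k in SV *.
set B := kneser_boundary k S.
set Tt := (V :\: S) :\: B.
have BV : B \subset V :\: S by apply/subsetP => u; rewrite /B /kneser_boundary inE => /andP[].
have TV : Tt \subset V by apply/subsetP => u; rewrite /Tt !inE => /and3P[].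
have hcard : (#|S| + (#|B| + #|Tt|))%N = #|V|.
  have h1 := cardsID B (V :\: S); rewrite (setIidPr BV) in h1.
  have h2 := cardsID S V; rewrite (setIidPr SV) in h2.
  by rewrite /Tt h1.
have hN : #|V| = 'C(2 * k + 1, k) by rewrite card_draws cT.
have hTt : forall u, u \in Tt -> forall v, v \in S -> ~~ (v \subset ~: u).
  move=> u; rewrite /Tt inE => /andP[uB uVS] v vS; apply/negP => vu.
  move/negP: uB; apply; rewrite /B /kneser_boundary inE uVS /=.
  apply/existsP; exists v; rewrite vS /= /kneser_adj disjoints_subset subsetC //.
have deg : forall u, u \in V -> #|[set v in lev _ k | v \subset ~: u]| = k.+1.
  move=> u uV; apply: cnt_sub.
  have := cardsC u; move: uV; rewrite /V /kneser_V inE cT => /eqP; lia.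
set sR := (#|S|)%:R : R.
set tR := (#|Tt|)%:R : R.
set NR := (#|V|)%:R : R.
have NRp : 0 < NR by rewrite /NR hN ltr0n bin_gt0; lia.
set a := sR / NR.
set bb := tR / NR.
pose x := fun u : {set 'I_(2 * k + 1)} => (u \in S)%:R : R.
pose y := fun u : {set 'I_(2 * k + 1)} => (u \in Tt)%:R : R.
pose f := fun u => x u - a.
pose g := fun u => y u - bb.
pose Af := fun (h : {set 'I_(2 * k + 1)} -> R) u => up k h (~: u).
set d := (k.+1)%:R : R.
have D1 : forall (c : R) u, u \in V -> Af (fun _ => c) u = c * d.
  move=> c u uV; rewrite /Af /up.
  transitivity (c * \sum_(v in lev _ k | v \subset ~: u) (1 : R)).
    by rewrite mulr_sumr; apply: eq_bigr => v _; rewrite mulr1.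
  by rewrite sum1_cond deg.
have Hx : forall u, u \in V -> Af x u = Af f u + a * d.
  move=> u uV; rewrite -(D1 a u uV) /Af /up -big_split /=.
  by apply: eq_bigr => v _; rewrite /f subrK.
have H1 : \sum_(u in V) y u * Af x u = 0.
  apply: big1 => u uV; rewrite /y; case uT: (u \in Tt); last by rewrite mul0r.
  rewrite mul1r /Af /up big1 // => v /andP[_ vu]; rewrite /x.
  case vS: (v \in S) => //; by move: (hTt u uT v vS); rewrite vu.
have Hf : \sum_(u in V) f u = 0.
  by rewrite /f sumrB ind_sum // sumr_const -[a *+ _]mulr_natr /a divfK ?subrr // gt_eqF.
have Hg : \sum_(u in V) g u = 0.
  by rewrite /g sumrB ind_sum // sumr_const -[bb *+ _]mulr_natr /bb divfK ?subrr // gt_eqF.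
have H4 : \sum_(u in V) Af f u = 0.
  transitivity (\sum_(u in V) 1 * Af f u); first by apply: eq_bigr => u _; rewrite mul1r.
  rewrite /Af /up (adj_sum _ _ (fun (v u : {set 'I_(2 * k + 1)}) => v \subset ~: u)).
  rewrite (eq_bigr (fun v => f v * d)); last first.
    move=> v vV; congr (_ * _).
    rewrite (eq_bigl (fun u => (u \in V) && (u \subset ~: v))); last by move=> u; rewrite subsetC.
    by rewrite sum1_cond deg.
  by rewrite -mulr_suml Hf mul0r.
set K := k%:R : R.
have H8 : \sum_(u in V) (Af f u) ^+ 2 <= K ^+ 2 * \sum_(u in V) f u ^+ 2.
  have L := @L2 R 'I_(2 * k + 1) k _ f Hf.
  have e1 : upn k f = \sum_(u in V) (Af f u) ^+ 2.
    rewrite /upn (reindex_inj (@setC_inj _)) /=; apply: eq_bigl => u.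
    rewrite /V /kneser_V /lev !inE; have := cardsC u; rewrite cT.
    move: (#|u|) (#|~: u|) => p q hc; apply/eqP/eqP; clear -hc; lia.
  rewrite -e1; apply: (le_trans (L _)); first by rewrite cT; clear -k1; lia.
  rewrite cT /nrm; apply: ler_wpM2r; first by apply: sumr_ge0 => u _; apply: sqr_ge0.
  by rewrite /K natrD natrM le_eqVlt; apply/orP; left; apply/eqP; ring.
have E : \sum_(u in V) y u * Af x u =
   \sum_(u in V) g u * Af f u + (a * d) * \sum_(u in V) g u + bb * \sum_(u in V) Af f u
   + bb * (a * d) * NR.
  rewrite (eq_bigr (fun u => g u * Af f u + (a * d) * g u + bb * Af f u + bb * (a * d))); last first.
    by move=> u uV; rewrite Hx // /g; ring.
  set SG := \sum_(u in V) g u; set SA := \sum_(u in V) Af f u; set SGA := \sum_(u in V) g u * Af f u.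
  rewrite !big_split /= -!mulr_sumr sumr_const -mulr_natr.
  by rewrite -!mulrA.
rewrite H1 Hg H4 !mulr0 !addr0 in E.
have CS := cauchy_schwarz V g (Af f).
have Xs : \sum_(u in V) g u * Af f u = - (bb * (a * d) * NR) by lra.
rewrite Xs sqrrN in CS.
have Vf : \sum_(u in V) f u ^+ 2 = sR - 2 * a * sR + NR * a ^+ 2 by apply: var_ind.
have Vg : \sum_(u in V) g u ^+ 2 = tR - 2 * bb * tR + NR * bb ^+ 2 by apply: var_ind.
have Hm : (bb * (a * d) * NR) ^+ 2 <= K ^+ 2 * (sR - 2 * a * sR + NR * a ^+ 2) * (tR - 2 * bb * tR + NR * bb ^+ 2).
  apply: (le_trans CS); rewrite -Vf -Vg [X in X <= _]mulrC; apply: ler_wpM2r H8.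
  by apply: sumr_ge0 => u _; apply: sqr_ge0.
have dK : d = K + 1 by rewrite /d /K -natr1.
have Hm2 : (NR * (tR / NR) * (sR / NR) * d) ^+ 2 <=
    K ^+ 2 * (sR - 2 * (sR / NR) * sR + NR * (sR / NR) ^+ 2) *
    (tR - 2 * (tR / NR) * tR + NR * (tR / NR) ^+ 2).
  have -> : NR * (tR / NR) * (sR / NR) * d = bb * (a * d) * NR by rewrite /a /bb; ring.
  exact: Hm.
have Hm3 := alg0 NRp dK Hm2.
set M := ('C(2 * k, k.-1))%:R : R.
have hb : (k * 'C(2 * k + 1, k) = (2 * k + 1) * 'C(2 * k, k.-1))%N.
  have := mul_bin_diag (2 * k + 1) k.-1; rewrite prednK // addn1 /= => ->; by [].
have KN : K * NR = (2 * K + 1) * M.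
  by rewrite /K /NR /M hN -natrM hb natrM natrD natrM.
have Kp : 0 < K by rewrite /K ltr0n.
have s0 : 0 <= sR by apply: ler0n.
have t0 : 0 <= tR by apply: ler0n.
have sN : sR <= NR by rewrite /sR /NR ler_nat -hcard leq_addr.
have tN : tR <= NR by rewrite /tR /NR ler_nat -hcard; move: (#|S|) (#|B|) (#|Tt|) => p q r; clear -k1; lia.
have hst := alg1 Kp NRp KN s0 t0 sN tN Hm3.
have hbeq : (#|B|)%:R = NR - sR - tR :> R.
  by rewrite /NR /sR /tR -hcard !natrD; ring.
have sM : sR <= M by rewrite /sR /M ler_nat.
rewrite /kbeta natrX -hN -/NR -/M.
exact: (alg2 rs0 rsS sM rsM t0 hst hbeq).
Qed.
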